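(* Let $V$ be a finite-dimensional vector space over a field and let $\rho,\lambda$ be endomorphisms of $V$. Suppose there is $n\in\mathbb Z_{\ge1}$ with $\rho^{n+1}=\rho^n$, $\ker(\rho^n)\cap\ker(\lambda)=0$ and $\rho^n\circ\lambda=\lambda\circ\rho^n$. Then $\mathrm{im}(\rho)+\mathrm{im}(\lambda)=V$. *)

(* Defs.v *)
From HB Require Import structures.
From mathcomp Require Import all_boot all_algebra.
Set Implicit Arguments. Unset Strict Implicit. Unset Printing Implicit Defensive.
Import GRing.Theory.
Local Open Scope ring_scope.

Definition lfun_pow (F : fieldType) (V : vectType F) (f : 'End(V)) (n : nat) : 'End(V) :=
  iter n (fun g => (f \o g)%VF) \1%VF.

(* Main.v *)
Require Import Defs.
From HB Require Import structures.
From mathcomp Require Import all_boot all_algebra.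
Import GRing.Theory.
Local Open Scope ring_scope.

Lemma pow_add (F : fieldType) (V : vectType F) (f : 'End(V)) m k :
  lfun_pow f (m + k) = (lfun_pow f m \o lfun_pow f k)%VF.
Proof.
elim: m => [|m IH]; first by rewrite add0n /lfun_pow /= comp_lfun1l.
by rewrite addSn /lfun_pow iterS -/(lfun_pow f (m + k)) IH comp_lfunA.
Qed.

Lemma pow_stab (F : fieldType) (V : vectType F) (f : 'End(V)) n k :
  lfun_pow f n.+1 = lfun_pow f n -> lfun_pow f (k + n) = lfun_pow f n.
Proof.
move=> H; elim: k => [|k IH] //.
by rewrite addSn /lfun_pow iterS -/(lfun_pow f (k + n)) IH; exact: H.
Qed.

Theorem mainTheorem5 (F : fieldType) (V : vectType F) (rho lambda : 'End(V)) (n : nat) :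
  (1 <= n)%N ->
  lfun_pow rho n.+1 = lfun_pow rho n ->
  (lker (lfun_pow rho n) :&: lker lambda = 0)%VS ->
  (lfun_pow rho n \o lambda = lambda \o lfun_pow rho n)%VF ->
  (limg rho + limg lambda)%VS = fullv.
Proof.
move=> n1 Hst Hker Hcomm.
set P := lfun_pow rho n.
have PP : (P \o P = P)%VF by rewrite /P -pow_add pow_stab.
have KP : (lker P <= lambda @: lker P)%VS.
  have sub : (lambda @: lker P <= lker P)%VS.
    apply/subvP => w /memv_imgP [u Hu ->].
    rewrite memv_ker -comp_lfunE Hcomm comp_lfunE.
    by move: Hu; rewrite memv_ker => /eqP ->; rewrite linear0.
  have : (lambda @: lker P == lker P)%VS.
    by rewrite eqEdim sub (limg_dim_eq Hker) leqnn.
  by move/eqP->.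
apply/eqP; rewrite eqEsubv subvf /=; apply/subvP => v _.
have -> : v = P v + (v - P v) by rewrite addrC subrK.
apply: memv_add.
  rewrite /P; case: (n) n1 => // m _.
  rewrite /lfun_pow iterS -/(lfun_pow rho m) comp_lfunE.
  exact: memv_img (memvf _).
have : v - P v \in lker P.
  by rewrite memv_ker linearB /= -comp_lfunE PP subrr.
move/(subvP KP); apply/subvP; exact: limgS (subvf _).
Qed.
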